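(* Consider the four-dimensional pp-wave spacetime with coordinates $(u,v,x,y)$ and metric $ds^2=H(u,x,y)\,du^2+2\,du\,dv+dx^2+dy^2$, where $H$ is an arbitrary smooth function of $u,x,y$. Then: (i) the 1-form $u\,du$ (dual to $u\,\partial_v$) is a closed affine vector field, i.e. a closed rank-1 antisymmetric affine tensor field; (ii) $du\wedge dx$ and $du\wedge dy$ are Killing–Yano tensors; (iii) $u\,du\wedge dx$ and $u\,du\wedge dy$ are proper rank-2 antisymmetric affine tensor fields; (iv) $u\,du\wedge dx\wedge dy$ is a rank-3 antisymmetric affine tensor field.
   Context: $\nabla$ is the Levi-Civita connection; symmetrization $(\cdots)$ over $k$ indices has weight $1/k!$. A rank-$p$ antisymmetric affine tensor field is a $p$-form $f$ with $\nabla_\mu\nabla_{(\nu}f_{\rho_1)\rho_2\cdots\rho_p}=0$; it is closed if $df=0$, Killing–Yano if $\nabla_{(\mu}f_{\nu_1)\nu_2\cdots\nu_p}=0$, and proper if $\nabla_{(\mu}f_{\nu_1)\nu_2\cdots\nu_p}\neq0$. For $p=1$ such a field is (the dual of) an affine vector field. *)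

(* Defs.v *)
From Stdlib Require Import Reals Lra List Arith ClassicalEpsilon.
Import ListNotations.
Open Scope R_scope.

(** Points of R^4: coordinates p 0 = u, p 1 = v, p 2 = x, p 3 = y
    (coordinates >= 4 are never used). *)
Definition pt := nat -> R.

Definition upd (p : pt) (i : nat) (t : R) : pt :=
  fun j => if Nat.eq_dec j i then t else p j.

(** Partial derivative in direction i (classically chosen; it is the true
    partial derivative whenever that exists). *)
Definition pd (i : nat) (F : pt -> R) (p : pt) : R :=
  epsilon (inhabits 0) (fun l => derivable_pt_lim (fun t => F (upd p i t)) (p i) l).

Fixpoint iterpd (l : list nat) (F : pt -> R) : pt -> R :=
  match l with nil => F | i :: l' => pd i (iterpd l' F) end.

Definition lt4 (i : nat) : Prop := (i < 4)%nat.

Definition continuous4 (G : pt -> R) : Prop :=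
  forall p eps, 0 < eps -> exists delta, 0 < delta /\
    forall q, (forall i, lt4 i -> Rabs (q i - p i) < delta) -> Rabs (G q - G p) < eps.

Definition smooth4 (F : pt -> R) : Prop :=
  forall l : list nat, Forall lt4 l ->
    (forall p i, lt4 i -> exists d,
        derivable_pt_lim (fun t => iterpd l F (upd p i t)) (p i) d)
    /\ continuous4 (iterpd l F).

Definition Hf (H : R -> R -> R -> R) : pt -> R := fun p => H (p 0%nat) (p 2%nat) (p 3%nat).

Definition gmet (H : R -> R -> R -> R) (m n : nat) (p : pt) : R :=
  match m, n with
  | O, O => Hf H p
  | O, S O | S O, O | S (S O), S (S O) | S (S (S O)), S (S (S O)) => 1
  | _, _ => 0
  end.

Definition ginv (H : R -> R -> R -> R) (m n : nat) (p : pt) : R :=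
  match m, n with
  | S O, S O => - Hf H p
  | O, S O | S O, O | S (S O), S (S O) | S (S (S O)), S (S (S O)) => 1
  | _, _ => 0
  end.

Definition sum4 (F : nat -> R) : R := F 0%nat + F 1%nat + F 2%nat + F 3%nat.

(** Christoffel symbols of the Levi-Civita connection:
    Gam l m n = Gamma^l_{mn}. *)
Definition Gam (H : R -> R -> R -> R) (l m n : nat) (p : pt) : R :=
  / 2 * sum4 (fun s => ginv H l s p *
     (pd m (gmet H s n) p + pd n (gmet H s m) p - pd s (gmet H m n) p)).

(** Covariant tensor fields: components indexed by lists of coordinate indices. *)
Definition tfield := list nat -> pt -> R.

Fixpoint repl (l : list nat) (i x : nat) : list nat :=
  match l, i with
  | nil, _ => nil
  | _ :: t, 0%nat => x :: t
  | a :: t, S k => a :: repl t k x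
  end.

Fixpoint remove_nth (l : list nat) (i : nat) : list nat :=
  match l, i with
  | nil, _ => nil
  | _ :: t, 0%nat => t
  | a :: t, S k => a :: remove_nth t k
  end.

Definition sumR (l : list R) : R := fold_right Rplus 0 l.

Definition nabla (H : R -> R -> R -> R) (T : tfield) : tfield :=
  fun idx p => match idx with
  | nil => 0
  | m :: nu => pd m (T nu) p
      - sumR (map (fun i => sum4 (fun l => Gam H l m (nth i nu 0%nat) p * T (repl nu i l) p))
                  (seq 0 (length nu)))
  end.

Definition Sym01 (T : tfield) : tfield :=
  fun idx p => match idx with
  | a :: b :: r => / 2 * (T (a :: b :: r) p + T (b :: a :: r) p)
  | _ => T idx p
  end.

Definition extd (f : tfield) : tfield :=
  fun idx p => sumR (map (fun i => (-1) ^ i * pd (nth i idx 0%nat) (f (remove_nth idx i)) p)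
                         (seq 0 (length idx))).

Definition vanish (k : nat) (T : tfield) : Prop :=
  forall idx p, length idx = k -> Forall lt4 idx -> T idx p = 0.

Definition swapl (idx : list nat) (i j : nat) : list nat :=
  repl (repl idx i (nth j idx 0%nat)) j (nth i idx 0%nat).

Definition is_form (k : nat) (f : tfield) : Prop :=
  forall idx p i j, length idx = k -> Forall lt4 idx -> (i < j < k)%nat ->
    f (swapl idx i j) p = - f idx p.

Definition affine_form H (k : nat) (f : tfield) : Prop :=
  is_form k f /\ vanish (k + 2) (nabla H (Sym01 (nabla H f))).

Definition closed_form (k : nat) (f : tfield) : Prop := vanish (k + 1) (extd f).

Definition killing_yano H (k : nat) (f : tfield) : Prop :=
  is_form k f /\ vanish (k + 1) (Sym01 (nabla H f)).

Definition proper_form H (k : nat) (f : tfield) : Prop :=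
  ~ vanish (k + 1) (Sym01 (nabla H f)).

(** Components of wedge products of coordinate differentials. *)
Definition delta (a i : nat) : R := if Nat.eq_dec a i then 1 else 0.

Definition dx1 (a : nat) (idx : list nat) : R :=
  match idx with [i] => delta a i | _ => 0 end.

Definition dx2 (a b : nat) (idx : list nat) : R :=
  match idx with [i; j] => delta a i * delta b j - delta a j * delta b i | _ => 0 end.

Definition dx3 (a b c : nat) (idx : list nat) : R :=
  match idx with
  | [i; j; k] =>
      delta a i * (delta b j * delta c k - delta b k * delta c j)
    - delta a j * (delta b i * delta c k - delta b k * delta c i)
    + delta a k * (delta b i * delta c j - delta b j * delta c i)
  | _ => 0 end.

Definition u_du : tfield := fun idx p => p 0%nat * dx1 0 idx.
Definition du_dx : tfield := fun idx _ => dx2 0 2 idx.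
Definition du_dy : tfield := fun idx _ => dx2 0 3 idx.
Definition u_du_dx : tfield := fun idx p => p 0%nat * dx2 0 2 idx.
Definition u_du_dy : tfield := fun idx p => p 0%nat * dx2 0 3 idx.
Definition u_du_dx_dy : tfield := fun idx p => p 0%nat * dx3 0 2 3 idx.

(* Main.v *)
Require Import Defs.
From Stdlib Require Import Reals Lra Lia List Arith ClassicalEpsilon FunctionalExtensionality.
Import ListNotations.
Open Scope R_scope.
Lemma pd_spec i F p l : derivable_pt_lim (fun t => F (upd p i t)) (p i) l -> pd i F p = l.
Proof.
  intro Hl. unfold pd.
  pose proof (epsilon_spec (inhabits 0) (fun l => derivable_pt_lim (fun t => F (upd p i t)) (p i) l) (ex_intro _ l Hl)) as E.
  eapply uniqueness_limite; eauto.
Qed.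

Lemma pd_const i (c : R) p : pd i (fun _ => c) p = 0.
Proof. apply pd_spec. apply derivable_pt_lim_const. Qed.

Lemma pd_u i (c : R) p : pd i (fun q => q 0%nat * c) p = delta 0 i * c.
Proof.
  apply pd_spec. unfold delta, upd.
  destruct (Nat.eq_dec 0 i) as [<-|n].
  - simpl. replace (1 * c) with (c * 1) by ring.
    replace (fun t => t * c) with (mult_real_fct c id).
    + apply derivable_pt_lim_scal, derivable_pt_lim_id.
    + apply functional_extensionality; intro t; unfold mult_real_fct, id; ring.
  - destruct (Nat.eq_dec 0 i); [congruence|].
    replace (0 * c) with 0 by ring. apply derivable_pt_lim_const.
Qed.

Lemma pd_Hf1 H p : pd 1 (Hf H) p = 0.
Proof.
  apply pd_spec. unfold Hf, upd. simpl. apply derivable_pt_lim_const.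
Qed.

Lemma pd_gmet H i m n p : pd i (gmet H m n) p = if andb (m =? 0)%nat (n =? 0)%nat then pd i (Hf H) p else 0.
Proof.
  destruct m as [|[|[|[|m]]]]; destruct n as [|[|[|[|n]]]]; simpl; try reflexivity;
  unfold gmet; apply pd_const.
Qed.
Lemma Gam0 H m n p : Gam H 0 m n p = 0.
Proof. unfold Gam, sum4, ginv. rewrite !pd_gmet. simpl. rewrite pd_Hf1.
  destruct (m =? 0)%nat, (n =? 0)%nat; simpl; ring. Qed.
Lemma Gam2 H m n p : Gam H 2 m n p = - / 2 * (if andb (m =? 0)%nat (n =? 0)%nat then pd 2 (Hf H) p else 0).
Proof. unfold Gam, sum4, ginv. rewrite !pd_gmet. simpl. ring. Qed.
Lemma Gam3 H m n p : Gam H 3 m n p = - / 2 * (if andb (m =? 0)%nat (n =? 0)%nat then pd 3 (Hf H) p else 0).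
Proof. unfold Gam, sum4, ginv. rewrite !pd_gmet. simpl. ring. Qed.
Lemma Gam2' H m n p : Gam H 2 m n p = - / 2 * (delta 0 m * delta 0 n) * pd 2 (Hf H) p.
Proof. rewrite Gam2. destruct m; destruct n; cbn; ring. Qed.
Lemma Gam3' H m n p : Gam H 3 m n p = - / 2 * (delta 0 m * delta 0 n) * pd 3 (Hf H) p.
Proof. rewrite Gam3. destruct m; destruct n; cbn; ring. Qed.

Arguments pd : simpl never.
Arguments Gam : simpl never.

Definition C1 (idx : list nat) : R := match idx with [m;n] => / 2 * (delta 0 m * delta 0 n + delta 0 n * delta 0 m) | _ => 0 end.
Definition C2 (b : nat) (idx : list nat) : R := match idx with
  [m;x;y] => / 2 * (delta 0 m * dx2 0 b [x;y] + delta 0 x * dx2 0 b [m;y]) | _ => 0 end.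
Definition C3 (idx : list nat) : R := match idx with
  [m;x;y;z] => / 2 * (delta 0 m * dx3 0 2 3 [x;y;z] + delta 0 x * dx3 0 2 3 [m;y;z]) | _ => 0 end.

Ltac crunch := unfold Sym01, nabla, sum4, u_du, du_dx, du_dy, u_du_dx, u_du_dy, u_du_dx_dy, C1, C2, C3;
  cbn; rewrite ?pd_const, ?pd_u, ?Gam0, ?Gam2', ?Gam3'; cbn; ring.

Lemma outer H (T : tfield) (C : list nat -> R) k :
  (forall idx q, length idx = k -> T idx q = C idx) ->
  forall k0 nu p, length nu = k ->
  nabla H T (k0 :: nu) p = - sumR (map (fun i => sum4 (fun l => Gam H l k0 (nth i nu 0%nat) p * C (repl nu i l))) (seq 0 (length nu))).
Proof.
  intros HT k0 nu p Hl. unfold nabla.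
  replace (T nu) with (fun _ : pt => C nu) by (apply functional_extensionality; intro; symmetry; auto).
  rewrite pd_const, Rminus_0_l. f_equal. f_equal. apply map_ext. intro i. unfold sum4.
  assert (forall l, T (repl nu i l) p = C (repl nu i l)) as E.
  { intros; apply HT. clear -Hl. revert i k Hl; induction nu; intros [|i] k Hl; simpl in *; auto.
    destruct k; [discriminate|]. f_equal; eauto. }
  rewrite !E. ring.
Qed.

Lemma S1 H idx q : length idx = 2%nat -> Sym01 (nabla H u_du) idx q = C1 idx.
Proof. intros Hl. destruct idx as [|m [|a [|? ?]]]; simpl in Hl; try discriminate. crunch. Qed.
Lemma S2x H idx q : length idx = 3%nat -> Sym01 (nabla H u_du_dx) idx q = C2 2 idx.
Proof. intros Hl. destruct idx as [|m [|a [|b [|? ?]]]]; simpl in Hl; try discriminate. crunch. Qed.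
Lemma S2y H idx q : length idx = 3%nat -> Sym01 (nabla H u_du_dy) idx q = C2 3 idx.
Proof. intros Hl. destruct idx as [|m [|a [|b [|? ?]]]]; simpl in Hl; try discriminate. crunch. Qed.
Lemma S3 H idx q : length idx = 4%nat -> Sym01 (nabla H u_du_dx_dy) idx q = C3 idx.
Proof. intros Hl. destruct idx as [|m [|a [|b [|c [|? ?]]]]]; simpl in Hl; try discriminate. crunch. Qed.

Ltac outer_tac S :=
  intros idx p Hl _; destruct idx as [|k0 nu]; [discriminate|];
  simpl in Hl; injection Hl as Hl;
  rewrite (outer _ _ _ _ (S _)) by exact Hl;
  repeat (destruct nu as [|? nu]; simpl in Hl; try discriminate); crunch.

Ltac form_tac :=
  intros idx p i j Hl _ Hij;
  repeat (destruct idx as [|? idx]; simpl in Hl; try discriminate);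
  (assert ((i = 0 /\ j = 1) \/ (i = 0 /\ j = 2) \/ (i = 1 /\ j = 2))%nat as Hc by lia;
   destruct Hc as [[-> ->]|[[-> ->]|[-> ->]]]; first [lia | unfold u_du, du_dx, du_dy, u_du_dx, u_du_dy, u_du_dx_dy; cbn; ring]).

Lemma aff1 H : affine_form H 1 u_du.
Proof. split. - intros idx p i j _ _ Hij; lia. - outer_tac S1. Qed.
Lemma closed1 : closed_form 1 u_du.
Proof.
  intros idx p Hl _. do 3 (destruct idx as [|? idx]; simpl in Hl; try discriminate).
  unfold extd, u_du. cbn. rewrite !pd_u. ring.
Qed.
Lemma ky_x H : killing_yano H 2 du_dx.
Proof. split. - form_tac. - intros idx p Hl _. do 4 (destruct idx as [|? idx]; simpl in Hl; try discriminate); crunch. Qed.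
Lemma ky_y H : killing_yano H 2 du_dy.
Proof. split. - form_tac. - intros idx p Hl _. do 4 (destruct idx as [|? idx]; simpl in Hl; try discriminate); crunch. Qed.
Lemma aff2x H : affine_form H 2 u_du_dx.
Proof. split. - form_tac. - outer_tac S2x. Qed.
Lemma aff2y H : affine_form H 2 u_du_dy.
Proof. split. - form_tac. - outer_tac S2y. Qed.
Lemma aff3 H : affine_form H 3 u_du_dx_dy.
Proof. split. - form_tac. - outer_tac S3. Qed.
Lemma prop2x H : proper_form H 2 u_du_dx.
Proof.
  intro Hv. specialize (Hv [0;0;2]%nat (fun _ => 0) eq_refl).
  rewrite S2x in Hv by reflexivity. unfold C2 in Hv. cbn in Hv.
  assert (E : / 2 * (1 * (1 * 1 - 0 * 0) + 1 * (1 * 1 - 0 * 0)) = 1) by field.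
  rewrite E in Hv. apply R1_neq_R0, Hv. repeat constructor; unfold lt4; lia.
Qed.
Lemma prop2y H : proper_form H 2 u_du_dy.
Proof.
  intro Hv. specialize (Hv [0;0;3]%nat (fun _ => 0) eq_refl).
  rewrite S2y in Hv by reflexivity. unfold C2 in Hv. cbn in Hv.
  assert (E : / 2 * (1 * (1 * 1 - 0 * 0) + 1 * (1 * 1 - 0 * 0)) = 1) by field.
  rewrite E in Hv. apply R1_neq_R0, Hv. repeat constructor; unfold lt4; lia.
Qed.

Theorem mainTheorem10 (H : R -> R -> R -> R) (Hsmooth : smooth4 (Hf H)) :
  (affine_form H 1 u_du /\ closed_form 1 u_du)
  /\ (killing_yano H 2 du_dx /\ killing_yano H 2 du_dy)
  /\ (affine_form H 2 u_du_dx /\ proper_form H 2 u_du_dx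
      /\ affine_form H 2 u_du_dy /\ proper_form H 2 u_du_dy)
  /\ affine_form H 3 u_du_dx_dy.
Proof.
  exact (conj (conj (aff1 H) closed1) (conj (conj (ky_x H) (ky_y H))
    (conj (conj (aff2x H) (conj (prop2x H) (conj (aff2y H) (prop2y H)))) (aff3 H)))).
Qed.
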